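(* Let $Z$ be a weakly efficient solution of the SDP relaxation described in the context, with first-row data $(z_+,z_-,\rho)$. If $\rho=0$, then $(z_+,z_-,0)$ is feasible and weakly efficient for the QCQP, and its QCQP objective value $F(z_+,z_-,0)=(G(z_+-z_-),0)$ equals the SDP objective value of $Z$.
   Context: Let $k,m,n\in\mathbb{N}$. Let $A_c,A_\delta\in\mathbb{R}^{m\times n}$ with $A_\delta\ge 0$ entrywise, $b_c,b_\delta\in\mathbb{R}^m$ with $b_\delta\ge0$, $G\in\mathbb{R}^{k\times n}$, and $\ell,u\in\mathbb{R}^n$ with $\ell\le u$. All vector inequalities are componentwise. QCQP: variables $x_+,x_-\in\mathbb{R}^n_{\ge0}$, $r\in[0,1]$, subject to $A_cx_+-A_cx_-+rA_\delta x_++rA_\delta x_-+rb_\delta-b_c\le0$ and $\ell\le x_+-x_-\le u$; vector objective $F(x_+,x_-,r)=(G(x_+-x_-),-r)\in\mathbb{R}^{k+1}$, minimized in the Pareto sense. SDP relaxation: variable a symmetric positive semidefinite matrix $Z$ of size $(2n+2)\times(2n+2)$ written in block form with row/column blocks of sizes $1,n,n,1$: $Z=\begin{pmatrix} Z_{00} & z_+^T & z_-^T & \rho\\ z_+ & * & * & w_+\\ z_- & * & * & w_-\\ \rho & w_+^T & w_-^T & \sigma\end{pmatrix}$, with $z_\pm,w_\pm\in\mathbb{R}^n$, $\rho,\sigma\in\mathbb{R}$. Constraints: $Z_{00}=1$; $A_cz_+-A_cz_-+A_\delta(w_++w_-)+\rho\, b_\delta-b_c\le0$; $\ell\le z_+-z_-\le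 u$; $z_+,z_-\ge0$, $\rho\ge0$, $w_+,w_-\ge0$; $\sigma\le1$. Vector objective $(G(z_+-z_-),-\rho)\in\mathbb{R}^{k+1}$, minimized in the Pareto sense. Efficiency (for minimizing a vector function $f$ over a feasible set $\mathcal{X}$): $x^*\in\mathcal{X}$ is efficient if there is no $x\in\mathcal{X}$ with $f(x)\le f(x^* )$ and $f(x)\ne f(x^* )$; weakly efficient if there is no $x\in\mathcal{X}$ with $f(x)<f(x^* )$ (all components strict). *)

(* Defs.v *)
From HB Require Import structures.
From mathcomp Require Import all_boot all_order all_algebra.
Set Implicit Arguments. Unset Strict Implicit. Unset Printing Implicit Defensive.
Import Order.TTheory GRing.Theory Num.Theory.
Local Open Scope ring_scope.

Section Defs.
Variable R : realFieldType.

Definition mle (p q : nat) (A B : 'M[R]_(p, q)) : Prop := forall i j, A i j <= B i j.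
Definition mlt (p q : nat) (A B : 'M[R]_(p, q)) : Prop := forall i j, A i j < B i j.

Definition psd (N : nat) (Z : 'M[R]_N) : Prop :=
  Z^T = Z /\ forall x : 'cV[R]_N, 0 <= (x^T *m Z *m x) ord0 ord0.

Definition efficient (T : Type) (p : nat) (X : T -> Prop) (f : T -> 'cV[R]_p) (x : T) : Prop :=
  X x /\ ~ (exists y, X y /\ mle (f y) (f x) /\ f y <> f x).
Definition weakly_efficient (T : Type) (p : nat) (X : T -> Prop) (f : T -> 'cV[R]_p) (x : T) : Prop :=
  X x /\ ~ (exists y, X y /\ mlt (f y) (f x)).

Variables (k m n : nat).
Variables (Ac Ad : 'M[R]_(m, n)) (bc bd : 'cV[R]_m) (G : 'M[R]_(k, n)) (l u : 'cV[R]_n).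

Definition qcqp_feasible (v : 'cV[R]_n * 'cV[R]_n * R) : Prop :=
  let: (xp, xm, r) := v in
  mle 0 xp /\ mle 0 xm /\ 0 <= r /\ r <= 1 /\
  mle (Ac *m xp - Ac *m xm + r *: (Ad *m xp) + r *: (Ad *m xm) + r *: bd - bc) 0 /\
  mle l (xp - xm) /\ mle (xp - xm) u.

Definition qcqp_obj (v : 'cV[R]_n * 'cV[R]_n * R) : 'cV[R]_(k + 1) :=
  let: (xp, xm, r) := v in col_mx (G *m (xp - xm)) (- r)%:M.

(* SDP relaxation: Z of size (2n+2), blocks of sizes 1, n, n, 1 *)
Definition sdpN := (n + n).+2.
Definition ix0 : 'I_sdpN := ord0.
Definition ixp (i : 'I_n) : 'I_sdpN := inord (1 + i).
Definition ixm (i : 'I_n) : 'I_sdpN := inord (1 + n + i).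
Definition ixr : 'I_sdpN := ord_max.

Definition zp (Z : 'M[R]_sdpN) : 'cV[R]_n := \col_i Z ix0 (ixp i).
Definition zm (Z : 'M[R]_sdpN) : 'cV[R]_n := \col_i Z ix0 (ixm i).
Definition rho (Z : 'M[R]_sdpN) : R := Z ix0 ixr.
Definition wp (Z : 'M[R]_sdpN) : 'cV[R]_n := \col_i Z (ixp i) ixr.
Definition wm (Z : 'M[R]_sdpN) : 'cV[R]_n := \col_i Z (ixm i) ixr.
Definition sigma (Z : 'M[R]_sdpN) : R := Z ixr ixr.

Definition sdp_feasible (Z : 'M[R]_sdpN) : Prop :=
  psd Z /\ Z ix0 ix0 = 1 /\
  mle (Ac *m zp Z - Ac *m zm Z + Ad *m (wp Z + wm Z) + rho Z *: bd - bc) 0 /\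
  mle l (zp Z - zm Z) /\ mle (zp Z - zm Z) u /\
  mle 0 (zp Z) /\ mle 0 (zm Z) /\ 0 <= rho Z /\ mle 0 (wp Z) /\ mle 0 (wm Z) /\
  sigma Z <= 1.

Definition sdp_obj (Z : 'M[R]_sdpN) : 'cV[R]_(k + 1) :=
  col_mx (G *m (zp Z - zm Z)) (- rho Z)%:M.

End Defs.

(* Main.v *)
Require Import Defs.
From HB Require Import structures.
From mathcomp Require Import all_boot all_order all_algebra.
From mathcomp Require Import zify ring lra.
Import Order.TTheory GRing.Theory Num.Theory.
Local Open Scope ring_scope.

Section Aux.
Variable R : realFieldType.
Variable n : nat.

Definition getv (x : 'cV[R]_n) (j : nat) : R :=
  if @insub _ (fun q => (q < n)%N) 'I_n j is Some i then x i ord0 else 0.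

Lemma getvE x (i : 'I_n) : getv x i = x i ord0.
Proof. by rewrite /getv valK. Qed.

Definition vf (xp xm : 'cV[R]_n) (r : R) (j : nat) : R :=
  if j == 0%N then 1 else if (j <= n)%N then getv xp (j - 1)
  else if (j <= n + n)%N then getv xm (j - 1 - n) else r.

Definition vv xp xm r : 'cV[R]_(sdpN n) := \col_j vf xp xm r j.

Definition ZZ xp xm r : 'M[R]_(sdpN n) := vv xp xm r *m (vv xp xm r)^T.

Lemma ZZE xp xm r i j : ZZ xp xm r i j = vf xp xm r i * vf xp xm r j.
Proof. by rewrite /ZZ mxE big_ord1 !mxE. Qed.

Lemma vf0 xp xm r : vf xp xm r (ix0 n) = 1.
Proof. by []. Qed.

Lemma vfp xp xm r i : vf xp xm r (ixp i) = xp i ord0.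
Proof.
rewrite /vf /ixp inordK; last by rewrite /sdpN; have := ltn_ord i; lia.
have H : (1 + i <= n)%N by have := ltn_ord i; lia.
rewrite H /=; have -> : (1 + i - 1 = i)%N by lia. by rewrite getvE.
Qed.

Lemma vfm xp xm r i : vf xp xm r (ixm i) = xm i ord0.
Proof.
rewrite /vf /ixm inordK; last by rewrite /sdpN; have := ltn_ord i; lia.
have H : (1 + n + i <= n)%N = false by lia.
have H2 : (1 + n + i <= n + n)%N by have := ltn_ord i; lia.
rewrite H H2 /=; have -> : (1 + n + i - 1 - n = i)%N by lia. by rewrite getvE.
Qed.

Lemma vfr xp xm r : vf xp xm r (ixr n) = r.
Proof.
rewrite /vf /ixr /=.
have H : ((n + n).+1 <= n)%N = false by lia.
have H2 : ((n + n).+1 <= n + n)%N = false by lia.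
by rewrite H H2.
Qed.

Lemma ZZ_psd xp xm r : psd (ZZ xp xm r).
Proof.
split; first by rewrite /ZZ trmx_mul trmxK.
move=> x.
have -> : x^T *m ZZ xp xm r *m x = (x^T *m vv xp xm r) *m (x^T *m vv xp xm r)^T.
  by rewrite trmx_mul trmxK /ZZ !mulmxA.
rewrite mxE big_ord1 [(_^T) _ _]mxE.
apply: sqr_ge0.
Qed.

End Aux.
Arguments ZZ {R n}.
Arguments vf {R n}.
Arguments vv {R n}.


Theorem mainTheorem3 (R : realFieldType) (k m n : nat)
  (Ac Ad : 'M[R]_(m, n)) (bc bd : 'cV[R]_m) (G : 'M[R]_(k, n)) (l u : 'cV[R]_n)
  (hAd : mle 0 Ad) (hbd : mle 0 bd) (hlu : mle l u)
  (Z : 'M[R]_(sdpN n))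
  (hZ : weakly_efficient (sdp_feasible Ac Ad bc bd l u) (sdp_obj G) Z)
  (hrho : rho Z = 0) :
  qcqp_feasible Ac Ad bc bd l u (zp Z, zm Z, 0)
  /\ weakly_efficient (qcqp_feasible Ac Ad bc bd l u) (qcqp_obj G) (zp Z, zm Z, 0)
  /\ qcqp_obj G (zp Z, zm Z, 0) = sdp_obj G Z.
Proof.
have Hobj : qcqp_obj G (zp Z, zm Z, 0) = sdp_obj G Z by rewrite /qcqp_obj /sdp_obj hrho.
have Hfeas : qcqp_feasible Ac Ad bc bd l u (zp Z, zm Z, 0).
  case: hZ => [[_ [_ [hc [hl [hu [hp [hm [_ [hwp [hwm _]]]]]]]]]] _].
  rewrite /qcqp_feasible; split=> //; split=> //; split=> //; split; first exact: ler01.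
  split=> //; move=> i j.
  rewrite !scale0r !addr0.
  apply: le_trans (hc i j).
  have hS : 0 <= (Ad *m (wp Z + wm Z)) i j.
    rewrite mxE; apply: sumr_ge0 => q _; apply: mulr_ge0.
      by have := hAd i q; rewrite mxE.
    by rewrite mxE; apply: addr_ge0; [have := hwp q j | have := hwm q j]; rewrite mxE.
  move: hS; rewrite hrho scale0r addr0 !mxE; lra.
split=> //; split=> //; split=> //.
case=> [[[xp xm] r] [hy hlt]].
case: hZ => _; apply.
exists (ZZ xp xm r).
have Ezp : zp (ZZ xp xm r) = xp.
  by apply/matrixP => i j; rewrite mxE ZZE vf0 vfp mul1r (ord1 j).
have Ezm : zm (ZZ xp xm r) = xm.
  by apply/matrixP => i j; rewrite mxE ZZE vf0 vfm mul1r (ord1 j).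
have Erho : rho (ZZ xp xm r) = r by rewrite /rho ZZE vf0 vfr mul1r.
have Ewp : wp (ZZ xp xm r) = r *: xp.
  by apply/matrixP => i j; rewrite mxE [RHS]mxE ZZE vfp vfr mulrC (ord1 j).
have Ewm : wm (ZZ xp xm r) = r *: xm.
  by apply/matrixP => i j; rewrite mxE [RHS]mxE ZZE vfm vfr mulrC (ord1 j).
move: hy => [hp [hm [hr0 [hr1 [hc [hl hu]]]]]].
split; last first.
  rewrite -Hobj.
  have -> : sdp_obj G (ZZ xp xm r) = qcqp_obj G (xp, xm, r) by rewrite /sdp_obj Ezp Ezm Erho.
  exact: hlt.
rewrite /sdp_feasible Ezp Ezm Erho Ewp Ewm; split; first exact: ZZ_psd.
split; first by rewrite ZZE vf0 mulr1.
split; first by rewrite mulmxDr -!scalemxAr addrA.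
split=> //; split=> //; split=> //; split=> //; split=> //.
split; first by move=> i j; rewrite !mxE mulr_ge0 //; have := hp i j; rewrite mxE.
split; first by move=> i j; rewrite !mxE mulr_ge0 //; have := hm i j; rewrite mxE.
rewrite /sigma ZZE vfr; have := ler_wpM2l hr0 hr1; rewrite mulr1 => h; exact: le_trans h hr1.
Qed.
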